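(* The set $\mathcal{A}$ is a convex subset of $\mathbb{P}(\mathbb{Z}^+)$. For any $F_1,F_2\in\mathcal{A}$ and $G\in\mathbb{P}(\mathbb{Z}^+)$, one has $F_1*F_2\in\mathcal{A}$ and $\sum_{k\ge0}F_1(k)G^{(k)}\in\mathcal{A}$.
   Context: $\mathbb{P}(\mathbb{Z}^+)$ is the set of functions $F:\mathbb{Z}\to[0,1]$ with $\sum_kF(k)=1$ and $F(k)=0$ for $k<0$. $*$ denotes convolution $(F_1*F_2)(m)=\sum_kF_1(k)F_2(m-k)$, $G^{(k)}$ is the $k$-th convolution power with $G^{(0)}=\delta_0$ (point mass at $0$). $\mathcal{A}=\{F\in\mathbb{P}(\mathbb{Z}^+):\sup_{n\in\mathbb{N}}n\sum_{k}|F^{(n)}(k)-F^{(n+1)}(k)|<\infty\}$. *)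

(* Defs.v *)
From Stdlib Require Import Reals ZArith.
From Coquelicot Require Import Coquelicot.
Open Scope R_scope.

Definition PZp (F : Z -> R) : Prop :=
  (forall k : Z, 0 <= F k <= 1) /\
  (forall k : Z, (k < 0)%Z -> F k = 0) /\
  is_series (fun n : nat => F (Z.of_nat n)) 1.

(* Convolution (F1*F2)(m) = sum_k F1(k) F2(m-k).  The sum is taken over
   k >= 0 (the terms with k < 0 vanish since F1 is supported on Z^+). *)
Definition conv (F1 F2 : Z -> R) : Z -> R :=
  fun m => Series (fun k : nat => F1 (Z.of_nat k) * F2 (m - Z.of_nat k)%Z).

Definition delta0 : Z -> R := fun k => if Z.eq_dec k 0 then 1 else 0.

Fixpoint convpow (G : Z -> R) (n : nat) : Z -> R :=
  match n with
  | O => delta0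
  | S n' => conv G (convpow G n')
  end.

(* The sum over k in Z is over k >= 0 (both distributions vanish on k < 0);
   convergence of the series is required explicitly. *)
Definition classA (F : Z -> R) : Prop :=
  PZp F /\
  exists C : R, forall n : nat, exists s : R,
    is_series (fun k : nat =>
      Rabs (convpow F n (Z.of_nat k) - convpow F (S n) (Z.of_nat k))) s /\
    INR n * s <= C.

Definition mixture (F G : Z -> R) : Z -> R :=
  fun m => Series (fun k : nat => F (Z.of_nat k) * convpow G k m).

(* Main.v *)
Require Import Defs.
From Stdlib Require Import Reals ZArith Lra Lia.
From Coquelicot Require Import Coquelicot.
Open Scope R_scope.

Lemma sum_zero (a : nat -> R) n : (forall k, (k <= n)%nat -> a k = 0) -> sum_f_R0 a n = 0.
Proof.
  intros H. induction n; simpl. apply H; lia.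
  rewrite IHn by (intros; apply H; lia). rewrite H by lia. ring.
Qed.

Lemma sum_nonneg (a : nat -> R) n : (forall k, (k <= n)%nat -> 0 <= a k) -> 0 <= sum_f_R0 a n.
Proof.
  intros H. induction n; simpl. apply H; lia.
  assert (0 <= sum_f_R0 a n) by (apply IHn; intros; apply H; lia).
  assert (0 <= a (S n)) by (apply H; lia). lra.
Qed.

Lemma sum_le (a b : nat -> R) n : (forall k, (k <= n)%nat -> a k <= b k) -> sum_f_R0 a n <= sum_f_R0 b n.
Proof.
  intros H. induction n; simpl. apply H; lia.
  assert (sum_f_R0 a n <= sum_f_R0 b n) by (apply IHn; intros; apply H; lia).
  assert (a (S n) <= b (S n)) by (apply H; lia). lra.
Qed.

Lemma sum_f_R0_minus (a b : nat -> R) n : sum_f_R0 (fun k => a k - b k) n = sum_f_R0 a n - sum_f_R0 b n.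
Proof. induction n; simpl; [ring| rewrite IHn; ring]. Qed.

Lemma sum_f_R0_scal (c : R) (a : nat -> R) n : sum_f_R0 (fun k => c * a k) n = c * sum_f_R0 a n.
Proof. induction n; simpl; [ring| rewrite IHn; ring]. Qed.

Lemma sum_swap (u : nat -> nat -> R) n m :
  sum_f_R0 (fun i => sum_f_R0 (fun j => u i j) m) n = sum_f_R0 (fun j => sum_f_R0 (fun i => u i j) n) m.
Proof.
  induction n; simpl. reflexivity.
  rewrite IHn. rewrite <- sum_plus. reflexivity.
Qed.

Lemma sum_partial_le (a : nat -> R) n m : (forall k, 0 <= a k) -> (n <= m)%nat -> sum_f_R0 a n <= sum_f_R0 a m.
Proof.
  intros H Hnm. induction Hnm. lra. simpl. specialize (H (S m)). lra.
Qed.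

Lemma term_le_sum (a : nat -> R) n : (forall k, 0 <= a k) -> a n <= sum_f_R0 a n.
Proof.
  intros H. destruct n; simpl. lra.
  assert (0 <= sum_f_R0 a n) by (apply sum_nonneg; auto). lra.
Qed.

Lemma is_series_finite (a : nat -> R) N : (forall k, (N < k)%nat -> a k = 0) -> is_series a (sum_f_R0 a N).
Proof.
  intros H. apply is_series_Reals. intros eps Heps. exists N. intros n Hn.
  replace (sum_f_R0 a n) with (sum_f_R0 a N). unfold Rdist. rewrite Rminus_diag, Rabs_R0. lra.
  induction Hn. reflexivity. simpl. rewrite H by lia. rewrite IHHn. ring.
Qed.

Lemma partial_le_series (a : nat -> R) l n : (forall k, 0 <= a k) -> is_series a l -> sum_f_R0 a n <= l.
Proof.
  intros Hp Hs. rewrite <- sum_n_Reals.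
  apply (is_lim_seq_incr_compare (sum_n a) l).
  - apply is_series_Reals in Hs. apply is_lim_seq_Reals. intros e He.
    destruct (Hs e He) as [N HN]. exists N. intros k Hk. rewrite sum_n_Reals. apply HN; auto.
  - intros k. rewrite !sum_n_Reals. simpl. specialize (Hp (S k)). lra.
Qed.

Lemma term_le_series (a : nat -> R) l n : (forall k, 0 <= a k) -> is_series a l -> a n <= l.
Proof. intros. eapply Rle_trans. apply term_le_sum; auto. eapply partial_le_series; eauto. Qed.

Lemma series_nonneg (a : nat -> R) l : (forall k, 0 <= a k) -> is_series a l -> 0 <= l.
Proof. intros. eapply Rle_trans with (a 0%nat). auto. eapply term_le_series; eauto. Qed.

Lemma is_series_bounded (a : nat -> R) M : (forall k, 0 <= a k) -> (forall n, sum_f_R0 a n <= M) ->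
  exists l, is_series a l /\ l <= M.
Proof.
  intros Hp HM.
  assert (Hf : ex_finite_lim_seq (sum_f_R0 a)).
  { apply ex_finite_lim_seq_incr with M; auto. intros n; simpl. specialize (Hp (S n)); lra. }
  destruct Hf as [l Hl]. exists l. split.
  - apply is_series_Reals. apply is_lim_seq_Reals in Hl. exact Hl.
  - assert (H := is_lim_seq_le _ _ _ _ HM Hl (is_lim_seq_const M)). simpl in H. exact H.
Qed.

Lemma is_series_sum_fin (f : nat -> nat -> R) (L : nat -> R) n :
  (forall i, (i <= n)%nat -> is_series (f i) (L i)) ->
  is_series (fun k => sum_f_R0 (fun i => f i k) n) (sum_f_R0 L n).
Proof.
  intros H. induction n; simpl. apply H; lia.
  apply (is_series_plus (fun k => sum_f_R0 (fun i => f i k) n) (f (S n))).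
  apply IHn; intros; apply H; lia. apply H; lia.
Qed.

Lemma is_series_scal_l' (c : R) (a : nat -> R) l : is_series a l -> is_series (fun n => c * a n) (c * l).
Proof. intros H. apply (is_series_scal_l c a l H). Qed.

Lemma is_series_minus' (a b : nat -> R) la lb : is_series a la -> is_series b lb -> is_series (fun n => a n - b n) (la - lb).
Proof. intros Ha Hb. apply (is_series_minus a b la lb Ha Hb). Qed.

Lemma is_series_plus' (a b : nat -> R) la lb : is_series a la -> is_series b lb -> is_series (fun n => a n + b n) (la + lb).
Proof. intros Ha Hb. apply (is_series_plus a b la lb Ha Hb). Qed.

Lemma fubini_half (u : nat -> nat -> R) (r : nat -> R) (S : R) :
  (forall i j, 0 <= u i j) -> (forall i, is_series (u i) (r i)) -> is_series r S ->
  exists c, (forall j, is_series (fun i => u i j) (c j)) /\ exists T, is_series c T /\ T <= S.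
Proof.
  intros Hp Hr HS.
  assert (Hrp : forall i, 0 <= r i) by (intros i; apply (series_nonneg (u i)); [intros; apply Hp| apply Hr]).
  assert (Hcol : forall j, ex_series (fun i => u i j)).
  { intros j. apply (@ex_series_le R_AbsRing R_CompleteNormedModule) with r. intros i. unfold norm; simpl. unfold abs; simpl.
    rewrite Rabs_pos_eq by apply Hp. apply (term_le_series (u i)); [intros; apply Hp| apply Hr].
    exists S; exact HS. }
  exists (fun j => Series (fun i => u i j)). split.
  - intros j. apply Series_correct, Hcol.
  - apply is_series_bounded.
    + intros j. eapply series_nonneg; [intros; apply Hp| apply Series_correct, Hcol].
    + intros M.
      assert (H1 : is_series (fun i => sum_f_R0 (fun j => u i j) M) (sum_f_R0 (fun j => Series (fun i => u i j)) M)).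
      { apply is_series_sum_fin with (f := fun j i => u i j). intros; apply Series_correct, Hcol. }
      assert (H2 : forall i, sum_f_R0 (fun j => u i j) M <= r i).
      { intros i. apply (partial_le_series (u i)); [intros; apply Hp| apply Hr]. }
      rewrite <- (is_series_unique _ _ H1). rewrite <- (is_series_unique _ _ HS).
      apply Series_le. intros i; split; auto. apply sum_nonneg; intros; apply Hp.
      exists S; exact HS.
Qed.

Lemma fubini_pos (u : nat -> nat -> R) (r : nat -> R) (S : R) :
  (forall i j, 0 <= u i j) -> (forall i, is_series (u i) (r i)) -> is_series r S ->
  exists c, (forall j, is_series (fun i => u i j) (c j)) /\ is_series c S.
Proof.
  intros Hp Hr HS.
  destruct (fubini_half u r S Hp Hr HS) as [c [Hc [T [HT HTS]]]].
  destruct (fubini_half (fun j i => u i j) c T) as [c' [Hc' [T' [HT' HT'T]]]]; auto.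
  assert (E : forall i, c' i = r i).
  { intros i. rewrite <- (is_series_unique _ _ (Hc' i)). apply is_series_unique. apply Hr. }
  assert (T' = S).
  { rewrite <- (is_series_unique _ _ HT'). rewrite <- (is_series_unique _ _ HS). apply Series_ext. auto. }
  exists c. split; auto. replace S with T by lra. exact HT.
Qed.

Lemma is_series_shift0 (w : nat -> R) (k : nat) (l : R) : is_series w l ->
  is_series (fun p => if (k <=? p)%nat then w (p - k)%nat else 0) l.
Proof.
  intros H. destruct k.
  - eapply is_series_ext; [|exact H]. intros p. simpl. f_equal. lia.
  - apply (is_series_decr_n _ (S k)). lia.
    assert (E : sum_n (fun p : nat => if (S k <=? p)%nat then w (p - S k)%nat else 0) (Init.Nat.pred (S k)) = 0).
    { rewrite sum_n_Reals. rewrite sum_zero. reflexivity.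
      intros j Hj. destruct (Nat.leb_spec (S k) j); [lia|reflexivity]. }
    match goal with |- is_series _ ?L => replace L with l end.
    2:{ change (l = l + - (sum_n (fun p : nat => if (S k <=? p)%nat then w (p - S k)%nat else 0) (Init.Nat.pred (S k)))). rewrite E. ring. }
    eapply is_series_ext; [|exact H].
    intros p. simpl. destruct (Nat.leb_spec k (k + p)); [|lia]. f_equal. lia.
Qed.

Lemma diag_pos (w : nat -> nat -> R) (r : nat -> R) (S : R) :
  (forall i j, 0 <= w i j) -> (forall i, is_series (w i) (r i)) -> is_series r S ->
  is_series (fun p => sum_f_R0 (fun k => w k (p - k)%nat) p) S.
Proof.
  intros Hp Hr HS.
  set (v := fun k p => if (k <=? p)%nat then w k (p - k)%nat else 0).
  destruct (fubini_pos v r S) as [c [Hc HcS]].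
  - intros i j; unfold v; destruct (i <=? j)%nat; [apply Hp| lra].
  - intros i. apply is_series_shift0, Hr.
  - exact HS.
  - eapply is_series_ext; [|exact HcS]. intros p.
    rewrite <- (is_series_unique _ _ (Hc p)).
    apply is_series_unique.
    replace (sum_f_R0 (fun k => w k (p - k)%nat) p) with (sum_f_R0 (fun i => v i p) p).
    apply is_series_finite. intros k Hk. unfold v. destruct (Nat.leb_spec k p); [lia|reflexivity].
    apply sum_eq. intros i Hi. unfold v. destruct (Nat.leb_spec i p); [reflexivity|lia].
Qed.

Definition d0 (n : nat) : R := match n with O => 1 | _ => 0 end.
Definition cauchy (a b : nat -> R) (n : nat) : R := sum_f_R0 (fun k => a k * b (n - k)%nat) n.
Fixpoint npow (a : nat -> R) (n : nat) : nat -> R :=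
  match n with O => d0 | S n' => cauchy a (npow a n') end.

Lemma cauchy_ext a a' b b' : (forall k, a k = a' k) -> (forall k, b k = b' k) -> forall m, cauchy a b m = cauchy a' b' m.
Proof. intros Ha Hb m. unfold cauchy. apply sum_eq. intros i _. rewrite Ha, Hb. reflexivity. Qed.

Lemma npow_ext a a' : (forall k, a k = a' k) -> forall n m, npow a n m = npow a' n m.
Proof. intros H n. induction n; intros m; simpl. reflexivity. apply cauchy_ext; auto. Qed.

Lemma cauchy_comm a b m : cauchy a b m = cauchy b a m.
Proof.
  unfold cauchy. rewrite <- sum_f_R0_skip. apply sum_eq. intros i Hi.
  replace (m - (m - i))%nat with i by lia. ring.
Qed.

Lemma sum_ind_le (g : nat -> R) i n : (i <= n)%nat ->
  sum_f_R0 (fun k => if (k <=? i)%nat then g k else 0) n = sum_f_R0 g i.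
Proof.
  intros H. induction H.
  - apply sum_eq. intros k Hk. destruct (Nat.leb_spec k i); [reflexivity|lia].
  - rewrite tech5, IHle. destruct (Nat.leb_spec (S m) i); [lia|ring].
Qed.

Lemma sum_shift_ind (h : nat -> R) k d :
  sum_f_R0 (fun i => if (k <=? i)%nat then h i else 0) (k + d) = sum_f_R0 (fun j => h (k + j)%nat) d.
Proof.
  induction d.
  - rewrite Nat.add_0_r. destruct k as [|k].
    + simpl. reflexivity.
    + rewrite tech5, sum_zero. destruct (Nat.leb_spec (S k) (S k)); [|lia]. simpl. rewrite Nat.add_0_r. ring.
      intros j Hj. destruct (Nat.leb_spec (S k) j); [lia|reflexivity].
  - replace (k + S d)%nat with (S (k + d)) by lia. rewrite !tech5, IHd.
    destruct (Nat.leb_spec k (S (k+d))); [|lia]. f_equal. f_equal. lia.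
Qed.

Lemma cauchy_assoc a b c m : cauchy a (cauchy b c) m = cauchy (cauchy a b) c m.
Proof.
  unfold cauchy.
  transitivity (sum_f_R0 (fun i => sum_f_R0 (fun k => if (k <=? i)%nat then a k * b (i - k)%nat * c (m - i)%nat else 0) m) m).
  2:{ apply sum_eq. intros i Hi. rewrite (sum_ind_le (fun k => a k * b (i - k)%nat * c (m - i)%nat) i m Hi).
      rewrite Rmult_comm, scal_sum. apply sum_eq. intros; ring. }
  rewrite sum_swap. apply sum_eq. intros k Hk.
  replace m with (k + (m - k))%nat at 2 by lia.
  rewrite (sum_shift_ind (fun i => a k * b (i - k)%nat * c (m - i)%nat) k (m - k)).
  rewrite scal_sum. apply sum_eq. intros j Hj.
  replace (k + j - k)%nat with j by lia. replace (m - (k + j))%nat with (m - k - j)%nat by lia. ring.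
Qed.

Lemma cauchy_d0_r a m : cauchy a d0 m = a m.
Proof.
  unfold cauchy. destruct m. simpl. ring.
  rewrite tech5, sum_zero. rewrite Nat.sub_diag. simpl. ring.
  intros k Hk. replace (S m - k)%nat with (S (m - k)) by lia. simpl. ring.
Qed.

Lemma cauchy_d0_l a m : cauchy d0 a m = a m.
Proof. rewrite cauchy_comm. apply cauchy_d0_r. Qed.

Lemma cauchy_lin_l (x y c : nat -> R) (p q : R) m :
  cauchy (fun k => p * x k + q * y k) c m = p * cauchy x c m + q * cauchy y c m.
Proof.
  unfold cauchy. rewrite <- !sum_f_R0_scal, <- sum_plus. apply sum_eq. intros; ring.
Qed.

Lemma cauchy_lin_r (x y c : nat -> R) (p q : R) m :
  cauchy c (fun k => p * x k + q * y k) m = p * cauchy c x m + q * cauchy c y m.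
Proof.
  rewrite cauchy_comm, cauchy_lin_l, !(cauchy_comm c). reflexivity.
Qed.

Lemma cauchy_sum_r (x : nat -> R) (y : nat -> nat -> R) n m :
  cauchy x (fun p => sum_f_R0 (fun j => y j p) n) m = sum_f_R0 (fun j => cauchy x (y j) m) n.
Proof.
  induction n; simpl. reflexivity.
  rewrite <- IHn.
  transitivity (cauchy x (fun p => 1 * sum_f_R0 (fun j => y j p) n + 1 * y (S n) p) m).
  apply cauchy_ext; intros; [reflexivity| simpl; ring].
  rewrite cauchy_lin_r. ring.
Qed.

Lemma npow_add g k l m : cauchy (npow g k) (npow g l) m = npow g (k + l) m.
Proof.
  revert m. induction k; intros m; simpl. apply cauchy_d0_l.
  rewrite <- cauchy_assoc. apply cauchy_ext; auto.
Qed.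

Lemma cauchy_interchange a b x y m :
  cauchy (cauchy a b) (cauchy x y) m = cauchy (cauchy a x) (cauchy b y) m.
Proof.
  rewrite <- cauchy_assoc.
  rewrite (cauchy_ext a a (cauchy b (cauchy x y)) (cauchy x (cauchy b y))); [| reflexivity|].
  - rewrite cauchy_assoc. reflexivity.
  - intros k. rewrite cauchy_assoc, (cauchy_ext (cauchy b x) (cauchy x b) y y); [|apply cauchy_comm|reflexivity].
    rewrite <- cauchy_assoc. reflexivity.
Qed.

Definition Prob (a : nat -> R) : Prop := (forall n, 0 <= a n) /\ is_series a 1.
Definition l1 (a : nat -> R) : Prop := ex_series (fun n => Rabs (a n)).
Definition nrm (a : nat -> R) : R := Series (fun n => Rabs (a n)).

Lemma nrm_nonneg a : l1 a -> 0 <= nrm a.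
Proof. intros H. apply (series_nonneg (fun n => Rabs (a n))). intros; apply Rabs_pos. apply Series_correct, H. Qed.

Lemma l1_ext x y : (forall k, x k = y k) -> l1 x -> l1 y /\ nrm y = nrm x.
Proof.
  intros E H. split.
  - destruct H as [l Hl]. exists l. apply (is_series_ext (fun n => Rabs (x n))); [|exact Hl]. intros; rewrite E; reflexivity.
  - unfold nrm. apply Series_ext. intros; rewrite E; reflexivity.
Qed.

Lemma l1_le x (b : nat -> R) : (forall k, Rabs (x k) <= b k) -> ex_series b -> l1 x /\ nrm x <= Series b.
Proof.
  intros H Hb. split.
  - apply (@ex_series_le R_AbsRing R_CompleteNormedModule) with b; auto.
    intros k. unfold norm; simpl. unfold abs; simpl. rewrite Rabs_Rabsolu. auto.
  - apply Series_le; auto. intros; split; auto. apply Rabs_pos.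
Qed.

Lemma l1_cauchy a b : l1 a -> l1 b -> l1 (cauchy a b) /\ nrm (cauchy a b) <= nrm a * nrm b.
Proof.
  intros Ha Hb.
  assert (HS := is_series_mult_pos _ _ _ _ (Series_correct _ Ha) (Series_correct _ Hb)
     (fun n => Rabs_pos _) (fun n => Rabs_pos _)).
  destruct (l1_le (cauchy a b) (fun n => sum_f_R0 (fun k => Rabs (a k) * Rabs (b (n - k)%nat)) n)) as [H1 H2].
  - intros k. unfold cauchy. eapply Rle_trans. apply sum_f_R0_triangle.
    apply sum_le. intros; rewrite Rabs_mult; lra.
  - eexists; exact HS.
  - split; auto. rewrite (is_series_unique _ _ HS) in H2. exact H2.
Qed.

Lemma l1_lin x y p q : l1 x -> l1 y -> l1 (fun k => p * x k + q * y k) /\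
  nrm (fun k => p * x k + q * y k) <= Rabs p * nrm x + Rabs q * nrm y.
Proof.
  intros Hx Hy.
  assert (HS : is_series (fun k => Rabs p * Rabs (x k) + Rabs q * Rabs (y k)) (Rabs p * nrm x + Rabs q * nrm y)).
  { apply is_series_plus'; apply is_series_scal_l'; apply Series_correct; auto. }
  destruct (l1_le (fun k => p * x k + q * y k) (fun k => Rabs p * Rabs (x k) + Rabs q * Rabs (y k))) as [H1 H2].
  - intros k. eapply Rle_trans. apply Rabs_triang. rewrite !Rabs_mult. lra.
  - eexists; exact HS.
  - split; auto. rewrite (is_series_unique _ _ HS) in H2. exact H2.
Qed.

Lemma l1_diff x y : l1 x -> l1 y -> l1 (fun k => x k - y k) /\ nrm (fun k => x k - y k) <= nrm x + nrm y.
Proof.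
  intros Hx Hy. destruct (l1_lin x y 1 (-1) Hx Hy) as [H1 H2].
  destruct (l1_ext (fun k => 1 * x k + -1 * y k) (fun k => x k - y k)) as [H3 H4]; auto.
  intros; ring. split; auto. rewrite H4. replace (Rabs (-1)) with 1 in H2 by (rewrite Rabs_left; lra). rewrite Rabs_R1 in H2. lra.
Qed.

Lemma l1_sum (c : nat -> R) (y : nat -> nat -> R) n : (forall j, (j <= n)%nat -> l1 (y j)) ->
  l1 (fun m => sum_f_R0 (fun j => c j * y j m) n) /\
  nrm (fun m => sum_f_R0 (fun j => c j * y j m) n) <= sum_f_R0 (fun j => Rabs (c j) * nrm (y j)) n.
Proof.
  intros H. induction n.
  - simpl. destruct (l1_lin (y 0%nat) (y 0%nat) (c 0%nat) 0) as [H1 H2]; try (apply H; lia).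
    destruct (l1_ext (fun k => c 0%nat * y 0%nat k + 0 * y 0%nat k) (fun m => c 0%nat * y 0%nat m)) as [H3 H4]; auto.
    intros; ring.
    split; auto. rewrite H4. rewrite Rabs_R0 in H2. lra.
  - destruct IHn as [I1 I2]. intros; apply H; lia.
    destruct (l1_lin _ (y (S n)) 1 (c (S n)) I1) as [H1 H2]. apply H; lia.
    destruct (l1_ext (fun k => 1 * sum_f_R0 (fun j => c j * y j k) n + c (S n) * y (S n) k) (fun m => sum_f_R0 (fun j => c j * y j m) (S n))) as [H3 H4]; auto.
    intros; simpl; ring.
    split; auto. rewrite H4. rewrite Rabs_R1 in H2. simpl. lra.
Qed.

Lemma Prob_l1 a : Prob a -> l1 a /\ nrm a = 1.
Proof.
  intros [Hp Hs].
  assert (E : forall k, Rabs (a k) = a k) by (intros; apply Rabs_pos_eq, Hp).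
  split. exists 1. eapply is_series_ext; [|exact Hs]. intros; rewrite E; auto.
  unfold nrm. rewrite (Series_ext _ a E). apply is_series_unique, Hs.
Qed.

Lemma Prob_le1 a n : Prob a -> a n <= 1.
Proof. intros [Hp Hs]. apply (term_le_series a); auto. Qed.

Lemma Prob_d0 : Prob d0.
Proof.
  split. intros [|n]; simpl; lra.
  replace 1 with (sum_f_R0 d0 0) by reflexivity. apply is_series_finite.
  intros [|k] Hk. lia. reflexivity.
Qed.

Lemma Prob_cauchy a b : Prob a -> Prob b -> Prob (cauchy a b).
Proof.
  intros [Ha Hsa] [Hb Hsb]. split.
  - intros n. apply sum_nonneg. intros. apply Rmult_le_pos; auto.
  - replace 1 with (1 * 1) by ring. apply is_series_mult_pos; auto.
Qed.

Lemma Prob_npow a n : Prob a -> Prob (npow a n).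
Proof. intros H. induction n; simpl. apply Prob_d0. apply Prob_cauchy; auto. Qed.

Lemma Prob_ext a b : (forall k, a k = b k) -> Prob a -> Prob b.
Proof.
  intros E [H1 H2]. split. intros; rewrite <- E; auto. eapply is_series_ext; [|exact H2]. auto.
Qed.

Definition Dif (a : nat -> R) (n : nat) : nat -> R := fun k => npow a n k - npow a (S n) k.

Definition RittN (a : nat -> R) : Prop :=
  exists C : R, forall n : nat, exists s : R,
    is_series (fun k => Rabs (npow a n k - npow a (S n) k)) s /\ INR n * s <= C.

Lemma Dif_l1 a n : Prob a -> l1 (Dif a n) /\ nrm (Dif a n) <= 2.
Proof.
  intros H. destruct (Prob_l1 _ (Prob_npow a n H)) as [H1 H2].
  destruct (Prob_l1 _ (Prob_npow a (S n) H)) as [H3 H4].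
  destruct (l1_diff _ _ H1 H3) as [H5 H6]. split; auto. unfold Dif. lra.
Qed.

Lemma Ritt_bound a : Prob a -> RittN a -> exists K, 0 <= K /\ forall j, nrm (Dif a j) * INR (S j) <= K.
Proof.
  intros Hp [C HC]. exists (C + 2). 
  assert (HC' : forall j, INR j * nrm (Dif a j) <= C).
  { intros j. destruct (HC j) as [s [Hs Hle]]. unfold nrm, Dif. rewrite (is_series_unique _ _ Hs). auto. }
  split.
  - specialize (HC' 0%nat). simpl in HC'. lra.
  - intros j. rewrite S_INR. specialize (HC' j). destruct (Dif_l1 a j Hp). nra.
Qed.

Lemma Ritt_of_bound a : Prob a -> (exists C, forall n, INR n * nrm (Dif a n) <= C) -> RittN a.
Proof.
  intros Hp [C HC]. exists C. intros n. exists (nrm (Dif a n)). split; auto.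
  apply Series_correct. apply (Dif_l1 a n Hp).
Qed.

Lemma Ritt_C a : RittN a -> exists C, forall n, INR n * nrm (Dif a n) <= C.
Proof.
  intros [C HC]. exists C. intros j. destruct (HC j) as [s [Hs Hle]]. unfold nrm, Dif. rewrite (is_series_unique _ _ Hs). auto.
Qed.

Lemma npow_cauchy a b n m : npow (cauchy a b) n m = cauchy (npow a n) (npow b n) m.
Proof.
  revert m. induction n; intros m; simpl.
  - rewrite cauchy_d0_l. reflexivity.
  - rewrite (cauchy_ext (cauchy a b) (cauchy a b) _ (cauchy (npow a n) (npow b n))); auto.
    apply cauchy_interchange.
Qed.

Theorem Ritt_cauchy a b : Prob a -> Prob b -> RittN a -> RittN b -> RittN (cauchy a b).
Proof.
  intros Pa Pb Ra Rb. apply Ritt_of_bound. apply Prob_cauchy; auto.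
  destruct (Ritt_C a Ra) as [Ca HCa]. destruct (Ritt_C b Rb) as [Cb HCb].
  exists (Ca + Cb). intros n.
  assert (E : forall k, Dif (cauchy a b) n k = 1 * cauchy (Dif a n) (npow b n) k + 1 * cauchy (npow a (S n)) (Dif b n) k).
  { intros k. unfold Dif. rewrite !npow_cauchy. unfold Dif.
    rewrite (cauchy_ext (fun k => npow a n k - npow a (S n) k) (fun k => 1 * npow a n k + (-1) * npow a (S n) k) (npow b n) (npow b n));
      [|intros; ring|reflexivity].
    rewrite (cauchy_ext (npow a (S n)) (npow a (S n)) (fun k => npow b n k - npow b (S n) k) (fun k => 1 * npow b n k + (-1) * npow b (S n) k));
      [|reflexivity|intros; ring].
    rewrite cauchy_lin_l, cauchy_lin_r. ring. }
  destruct (Dif_l1 a n Pa) as [Da _]. destruct (Dif_l1 b n Pb) as [Db _].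
  destruct (Prob_l1 _ (Prob_npow a n Pa)) as [LX NX].
  destruct (Prob_l1 _ (Prob_npow a (S n) Pa)) as [LX' NX'].
  destruct (Prob_l1 _ (Prob_npow b n Pb)) as [LY NY].
  destruct (l1_cauchy _ _ Da LY) as [L1 N1].
  destruct (l1_cauchy _ _ LX' Db) as [L2 N2].
  destruct (l1_lin _ _ 1 1 L1 L2) as [L3 N3].
  destruct (l1_ext _ (Dif (cauchy a b) n) (fun k => eq_sym (E k)) L3) as [L4 N4].
  rewrite N4. rewrite Rabs_R1 in N3.  rewrite NY in N1. rewrite NX' in N2.
  specialize (HCa n). specialize (HCb n). assert (0 <= INR n) by apply pos_INR.
  nra.
Qed.

Fixpoint Bw (t s : R) (n j : nat) : R :=
  match n, j with
  | O, O => 1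
  | O, S _ => 0
  | S n', O => s * Bw t s n' O
  | S n', S j' => t * Bw t s n' j' + s * Bw t s n' (S j')
  end.

Lemma Bw_gt t s n j : (n < j)%nat -> Bw t s n j = 0.
Proof.
  revert j. induction n; intros j H; destruct j; simpl; try lia; try ring.
  rewrite !IHn by lia. ring.
Qed.

Lemma Bw_0 t s n : Bw t s n 0 = s ^ n.
Proof. induction n; simpl; [|rewrite IHn]; ring. Qed.

Lemma Bw_nonneg t s n j : 0 <= t -> 0 <= s -> 0 <= Bw t s n j.
Proof.
  intros Ht Hs. revert j. induction n; intros j; destruct j; simpl; try lra.
  - specialize (IHn 0%nat). nra.
  - specialize (IHn j) as H1. specialize (IHn (S j)). nra.
Qed.

Lemma Bw_sum t s n : t + s = 1 -> sum_f_R0 (Bw t s n) n = 1.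
Proof.
  intros Hts. induction n. reflexivity.
  rewrite decomp_sum by lia. simpl Init.Nat.pred.
  transitivity (s * Bw t s n 0 + (t * sum_f_R0 (Bw t s n) n + s * sum_f_R0 (fun i => Bw t s n (S i)) n)).
  - rewrite !scal_sum, <- sum_plus. simpl Bw at 1. f_equal.  apply sum_eq. intros; simpl; ring.
  - replace (s * Bw t s n 0 + (t * sum_f_R0 (Bw t s n) n + s * sum_f_R0 (fun i => Bw t s n (S i)) n))
      with (t * sum_f_R0 (Bw t s n) n + s * (Bw t s n 0 + sum_f_R0 (fun i => Bw t s n (S i)) n)) by ring.
    rewrite IHn.
    replace (Bw t s n 0 + sum_f_R0 (fun i => Bw t s n (S i)) n) with (sum_f_R0 (Bw t s n) (S n)).
    rewrite tech5, Bw_gt, IHn by lia. lra.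
    rewrite decomp_sum by lia. reflexivity.
Qed.

Lemma Bw_id1 t s n j : Bw t s (S n) (S j) * INR (S j) = INR (S n) * t * Bw t s n j.
Proof.
  revert j. induction n; intros j.
  - destruct j; simpl; ring.
  - destruct j.
    + change (Bw t s (S (S n)) 1) with (t * Bw t s (S n) 0 + s * Bw t s (S n) 1).
      specialize (IHn 0%nat). change (INR 1) with 1 in *. rewrite Rmult_1_r in IHn.
      rewrite IHn. rewrite !Bw_0. simpl Bw. rewrite !S_INR. simpl pow. ring.
    + change (Bw t s (S (S n)) (S (S j))) with (t * Bw t s (S n) (S j) + s * Bw t s (S n) (S (S j))).
      specialize (IHn (S j)) as I2. specialize (IHn j) as I1.
      assert (F : Bw t s (S n) (S j) = t * Bw t s n j + s * Bw t s n (S j)) by reflexivity.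
      rewrite !S_INR in *.
      replace ((t * Bw t s (S n) (S j) + s * Bw t s (S n) (S (S j))) * (INR j + 1 + 1))
        with (t * (Bw t s (S n) (S j) * (INR j + 1)) + t * Bw t s (S n) (S j) + s * (Bw t s (S n) (S (S j)) * (INR j + 1 + 1))) by ring.
      rewrite I1, I2, F. ring.
Qed.

Lemma Bw_id2 t s n j : Bw t s (S n) j * (INR (S n) - INR j) = INR (S n) * s * Bw t s n j.
Proof.
  revert j. induction n; intros j.
  - destruct j as [|[|j]]; simpl; ring.
  - destruct j.
    + rewrite !Bw_0. simpl pow. rewrite !S_INR. simpl INR. ring.
    + change (Bw t s (S (S n)) (S j)) with (t * Bw t s (S n) j + s * Bw t s (S n) (S j)).
      specialize (IHn (S j)) as I2. specialize (IHn j) as I1.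
      assert (F : Bw t s (S n) (S j) = t * Bw t s n j + s * Bw t s n (S j)) by reflexivity.
      rewrite !S_INR in *.
      replace ((t * Bw t s (S n) j + s * Bw t s (S n) (S j)) * (INR n + 1 + 1 - (INR j + 1)))
        with (t * (Bw t s (S n) j * (INR n + 1 - INR j)) + s * (Bw t s (S n) (S j) * (INR n + 1 - (INR j + 1))) + s * Bw t s (S n) (S j)) by ring.
      rewrite I1, I2, F. ring.
Qed.

Definition Ex a b j k := cauchy (npow a j) (npow b k).

Lemma cauchy_scal_r x y c m : cauchy x (fun p => c * y p) m = c * cauchy x y m.
Proof.
  rewrite (cauchy_ext x x (fun p => c * y p) (fun p => c * y p + 0 * y p)); [|reflexivity|intros; ring].
  rewrite cauchy_lin_r. ring.
Qed.

Lemma cauchy_h_E t s a b j k m :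
  cauchy (fun p => t * a p + s * b p) (Ex a b j k) m = t * Ex a b (S j) k m + s * Ex a b j (S k) m.
Proof.
  rewrite cauchy_lin_l. unfold Ex. rewrite !cauchy_assoc. simpl npow. f_equal.
  f_equal.
  rewrite (cauchy_ext (cauchy b (npow a j)) (cauchy (npow a j) b) (npow b k) (npow b k)); [|apply cauchy_comm|reflexivity].
  rewrite <- cauchy_assoc. reflexivity.
Qed.

Lemma expansion t s a b n m :
  npow (fun p => t * a p + s * b p) n m = sum_f_R0 (fun j => Bw t s n j * Ex a b j (n - j) m) n.
Proof.
  revert m. induction n; intros m.
  - simpl. unfold Ex. simpl. rewrite cauchy_d0_l. ring.
  - simpl npow at 1.
    rewrite (cauchy_ext (fun p => t * a p + s * b p) (fun p => t * a p + s * b p) (npow (fun p => t * a p + s * b p) n) (fun p => sum_f_R0 (fun j => Bw t s n j * Ex a b j (n - j) p) n)); [|reflexivity|apply IHn].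
    rewrite (cauchy_sum_r _ (fun j p => Bw t s n j * Ex a b j (n - j) p)).
    rewrite (sum_eq _ (fun j => t * (Bw t s n j * Ex a b (S j) (n - j) m) + s * (Bw t s n j * Ex a b j (S n - j) m))).
    2:{ intros j Hj. rewrite cauchy_scal_r, cauchy_h_E. replace (S n - j)%nat with (S (n - j)) by lia. ring. }
    rewrite sum_plus.
    set (g := fun i => s * (Bw t s n i * Ex a b i (S n - i) m)).
    replace (sum_f_R0 g n) with (sum_f_R0 g (S n)).
    2:{ rewrite tech5. unfold g at 2. rewrite (Bw_gt t s n (S n)) by lia. ring. }
    rewrite (decomp_sum g) by lia. rewrite (decomp_sum (fun j => Bw t s (S n) j * Ex a b j (S n - j) m)) by lia.
    simpl Init.Nat.pred. unfold g. simpl Bw.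
    rewrite (sum_eq (fun i => (t * Bw t s n i + s * Bw t s n (S i)) * Ex a b (S i) (S n - S i) m)
                    (fun i => t * (Bw t s n i * Ex a b (S i) (n - i) m) + s * (Bw t s n (S i) * Ex a b (S i) (S n - S i) m))).
    2:{ intros; simpl; ring. }
    rewrite sum_plus. ring.
Qed.

Lemma expansion_step t s a b n m :
  cauchy (fun p => t * a p + s * b p) (npow (fun p => t * a p + s * b p) n) m =
  sum_f_R0 (fun j => Bw t s n j * (t * Ex a b (S j) (n - j) m + s * Ex a b j (S (n - j)) m)) n.
Proof.
  rewrite (cauchy_ext (fun p => t * a p + s * b p) (fun p => t * a p + s * b p) (npow (fun p => t * a p + s * b p) n) (fun p => sum_f_R0 (fun j => Bw t s n j * Ex a b j (n - j) p) n)); [|reflexivity|apply expansion].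
  rewrite (cauchy_sum_r _ (fun j p => Bw t s n j * Ex a b j (n - j) p)).
  apply sum_eq. intros j Hj. rewrite cauchy_scal_r, cauchy_h_E. reflexivity.
Qed.

Lemma sum_Bw_S t s n : 0 <= t -> 0 <= s -> t + s = 1 -> sum_f_R0 (fun j => Bw t s (S n) (S j)) n <= 1.
Proof.
  intros Ht Hs Hts. assert (H := Bw_sum t s (S n) Hts). rewrite decomp_sum in H by lia.
  simpl Init.Nat.pred in H. assert (0 <= Bw t s (S n) 0) by (apply Bw_nonneg; auto). lra.
Qed.

Lemma sum_Bw_n t s n : 0 <= t -> 0 <= s -> t + s = 1 -> sum_f_R0 (fun j => Bw t s (S n) j) n <= 1.
Proof.
  intros Ht Hs Hts. assert (H := Bw_sum t s (S n) Hts). rewrite tech5 in H.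
  assert (0 <= Bw t s (S n) (S n)) by (apply Bw_nonneg; auto). change (sum_f_R0 (Bw t s (S n)) n <= 1). lra.
Qed.

Theorem Ritt_convex a b t : Prob a -> Prob b -> RittN a -> RittN b -> 0 <= t <= 1 ->
  Prob (fun k => t * a k + (1 - t) * b k) /\ RittN (fun k => t * a k + (1 - t) * b k).
Proof.
  intros Pa Pb Ra Rb Ht. set (s := 1 - t).
  assert (Hs : 0 <= s) by (unfold s; lra). assert (Hts : t + s = 1) by (unfold s; lra).
  assert (Ph : Prob (fun k => t * a k + s * b k)).
  { destruct Pa as [Pa1 Pa2]. destruct Pb as [Pb1 Pb2]. split.
    - intros n. specialize (Pa1 n). specialize (Pb1 n). nra.
    - rewrite <- Hts. replace (t + s) with (t * 1 + s * 1) by ring.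
      apply is_series_plus'; apply is_series_scal_l'; auto. }
  split; [exact Ph|].
  apply Ritt_of_bound; [exact Ph|].
  destruct (Ritt_bound a Pa Ra) as [Ka [HKa0 HKa]].
  destruct (Ritt_bound b Pb Rb) as [Kb [HKb0 HKb]].
  exists (Ka + Kb). intros n.
  set (h := fun k => t * a k + s * b k).
  set (Z := fun j m => t * cauchy (Dif a j) (npow b (n - j)) m + s * cauchy (npow a j) (Dif b (n - j)) m).
  assert (E : forall m, sum_f_R0 (fun j => Bw t s n j * Z j m) n = Dif h n m).
  { intros m. unfold Dif. simpl npow. unfold h. rewrite expansion, expansion_step.
    rewrite <- sum_f_R0_minus. apply sum_eq. intros j Hj. unfold Z.
    rewrite (cauchy_ext (Dif a j) (fun k => 1 * npow a j k + (-1) * npow a (S j) k) (npow b (n - j)) (npow b (n - j)));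
      [|intros; unfold Dif; ring|reflexivity].
    rewrite (cauchy_ext (npow a j) (npow a j) (Dif b (n - j)) (fun k => 1 * npow b (n - j) k + (-1) * npow b (S (n - j)) k));
      [|reflexivity|intros; unfold Dif; ring].
    rewrite cauchy_lin_l, cauchy_lin_r. unfold Ex. simpl npow.
    unfold s. ring. }
  assert (LZ : forall j, l1 (Z j) /\ nrm (Z j) <= t * nrm (Dif a j) + s * nrm (Dif b (n - j))).
  { intros j.
    destruct (Dif_l1 a j Pa) as [Da _]. destruct (Dif_l1 b (n - j) Pb) as [Db _].
    destruct (Prob_l1 _ (Prob_npow a j Pa)) as [LX NX].
    destruct (Prob_l1 _ (Prob_npow b (n - j) Pb)) as [LY NY].
    destruct (l1_cauchy _ _ Da LY) as [L1 N1].
    destruct (l1_cauchy _ _ LX Db) as [L2 N2].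
    destruct (l1_lin _ _ t s L1 L2) as [L3 N3].
    rewrite NY in N1. rewrite NX in N2. rewrite (Rabs_pos_eq t) in N3 by lra. rewrite (Rabs_pos_eq s) in N3 by lra.
    split; [exact L3|]. unfold Z. nra. }
  destruct (l1_sum (Bw t s n) Z n (fun j _ => proj1 (LZ j))) as [LS NS].
  destruct (l1_ext _ (Dif h n) E LS) as [LD ND].
  assert (Bound : INR (S n) * sum_f_R0 (fun j => Rabs (Bw t s n j) * nrm (Z j)) n <= Ka + Kb).
  { rewrite scal_sum.
    apply Rle_trans with (sum_f_R0 (fun j => Ka * Bw t s (S n) (S j) + Kb * Bw t s (S n) j) n).
    - apply sum_le. intros j Hj. rewrite Rabs_pos_eq by (apply Bw_nonneg; lra).
      destruct (LZ j) as [_ HZ].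
      assert (I1 := Bw_id1 t s n j). assert (I2 := Bw_id2 t s n j).
      replace (INR (S n) - INR j) with (INR (S (n - j))) in I2 by (rewrite !S_INR, minus_INR by lia; ring).
      assert (A1 := HKa j). assert (A2 := HKb (n - j)%nat).
      assert (B0 := Bw_nonneg t s n j ltac:(lra) Hs).
      assert (B1 := Bw_nonneg t s (S n) (S j) ltac:(lra) Hs).
      assert (B2 := Bw_nonneg t s (S n) j ltac:(lra) Hs).
      assert (N0 : 0 <= nrm (Z j)) by (apply nrm_nonneg, LZ).
      assert (0 <= INR (S n)) by apply pos_INR.
      apply Rle_trans with (INR (S n) * t * Bw t s n j * nrm (Dif a j) + INR (S n) * s * Bw t s n j * nrm (Dif b (n - j))).
      + assert (Bw t s n j * nrm (Z j) <= Bw t s n j * (t * nrm (Dif a j) + s * nrm (Dif b (n - j)))) by (apply Rmult_le_compat_l; auto).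
        nra.
      + rewrite <- I1, <- I2. nra.
    - rewrite sum_plus. rewrite (sum_f_R0_scal Ka (fun j => Bw t s (S n) (S j))), (sum_f_R0_scal Kb (fun j => Bw t s (S n) j)).
      assert (S1 := sum_Bw_S t s n ltac:(lra) Hs Hts).
      assert (S2 := sum_Bw_n t s n ltac:(lra) Hs Hts).
      nra. }
  assert (0 <= nrm (fun m => sum_f_R0 (fun j => Bw t s n j * Z j m) n)) by (apply nrm_nonneg; auto).
  rewrite S_INR in Bound. assert (0 <= INR n) by apply pos_INR.
  change (INR n * nrm (Dif h n) <= Ka + Kb). rewrite ND.
  set (Q := sum_f_R0 (fun j => Rabs (Bw t s n j) * nrm (Z j)) n) in *. nra.
Qed.

Definition mixN (a g : nat -> R) (m : nat) : R := Series (fun k => a k * npow g k m).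

Lemma npow_bounds g k m : Prob g -> 0 <= npow g k m <= 1.
Proof. intros Pg. split. apply (Prob_npow g k Pg). apply Prob_le1, Prob_npow, Pg. Qed.

Lemma mix_series x g m : (forall k, 0 <= x k) -> ex_series x -> Prob g ->
  is_series (fun k => x k * npow g k m) (mixN x g m).
Proof.
  intros Hx Ex Pg. apply Series_correct.
  apply (@ex_series_le R_AbsRing R_CompleteNormedModule) with x; auto.
  intros k. unfold norm; simpl. unfold abs; simpl. destruct (npow_bounds g k m Pg).
  specialize (Hx k). rewrite Rabs_pos_eq by nra. nra.
Qed.

Lemma Prob_mix a g : Prob a -> Prob g -> Prob (mixN a g).
Proof.
  intros [Pa1 Pa2] Pg.
  destruct (fubini_pos (fun k m => a k * npow g k m) (fun k => a k * 1) 1) as [c [Hc Hs]].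
  - intros i j. destruct (npow_bounds g i j Pg). specialize (Pa1 i). nra.
  - intros i. apply is_series_scal_l'. apply (Prob_npow g i Pg).
  - apply (is_series_ext a); [intros k; apply eq_sym, Rmult_1_r|exact Pa2].
  - assert (E : forall m, c m = mixN a g m).
    { intros m. rewrite <- (is_series_unique _ _ (Hc m)). reflexivity. }
    split.
    + intros m. rewrite <- E. apply (series_nonneg (fun k => a k * npow g k m)); [|apply Hc].
      intros k. destruct (npow_bounds g k m Pg). specialize (Pa1 k). nra.
    + eapply is_series_ext; [|exact Hs]. exact E.
Qed.

Lemma mix_d0 g m : mixN d0 g m = d0 m.
Proof.
  unfold mixN. replace (d0 m) with (sum_f_R0 (fun k => d0 k * npow g k m) 0).
  apply is_series_unique, is_series_finite. intros [|k] Hk; [lia|simpl; ring].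
  simpl. ring.
Qed.

Lemma mix_product x y g m : (forall k, 0 <= x k) -> ex_series x -> (forall k, 0 <= y k) -> ex_series y -> Prob g ->
  cauchy (mixN x g) (mixN y g) m = mixN (cauchy x y) g m.
Proof.
  intros Hx Ex Hy Ey Pg.
  set (W := fun k l => x k * y l * npow g (k + l) m).
  set (R0 := fun k => sum_f_R0 (fun i => x k * npow g k i * mixN y g (m - i)) m).
  assert (HW : forall k, is_series (W k) (R0 k)).
  { intros k. unfold R0.
    apply (is_series_ext (fun l => sum_f_R0 (fun i => (x k * npow g k i) * (y l * npow g l (m - i))) m)).
    - intros l. unfold W. rewrite <- npow_add. unfold cauchy. rewrite scal_sum. apply sum_eq. intros; ring.
    - apply (is_series_sum_fin (fun i l => (x k * npow g k i) * (y l * npow g l (m - i)))).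
      intros i _. apply is_series_scal_l'. apply mix_series; auto. }
  assert (HR : is_series R0 (cauchy (mixN x g) (mixN y g) m)).
  { unfold R0, cauchy.
    apply (is_series_sum_fin (fun i k => x k * npow g k i * mixN y g (m - i))).
    intros i _. apply is_series_scal_r. apply mix_series; auto. }
  assert (D := diag_pos W R0 _ (fun i j => ltac:(unfold W; destruct (npow_bounds g (i + j) m Pg); specialize (Hx i); specialize (Hy j); apply Rmult_le_pos; [apply Rmult_le_pos|]; lra)) HW HR).
  unfold mixN at 3. symmetry. apply is_series_unique.
  eapply is_series_ext; [|exact D]. intros p. unfold W, cauchy.
  rewrite (Rmult_comm (sum_f_R0 _ p)), scal_sum. apply sum_eq. intros k Hk.
  replace (k + (p - k))%nat with p by lia. ring.
Qed.

Lemma npow_mix a g n m : Prob a -> Prob g -> npow (mixN a g) n m = mixN (npow a n) g m.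
Proof.
  intros Pa Pg. revert m. induction n; intros m.
  - simpl. symmetry. apply mix_d0.
  - simpl npow at 1. rewrite (cauchy_ext (mixN a g) (mixN a g) _ (mixN (npow a n) g)); [|reflexivity|apply IHn].
    destruct (Prob_npow a n Pa) as [P1 P2]. destruct Pa as [Pa1 Pa2].
    apply mix_product; auto. eexists; exact Pa2. eexists; exact P2.
Qed.

Lemma mix_diff x y g : Prob x -> Prob y -> Prob g ->
  l1 (fun m => mixN x g m - mixN y g m) /\ nrm (fun m => mixN x g m - mixN y g m) <= nrm (fun k => x k - y k).
Proof.
  intros Px Py Pg.
  destruct (Prob_l1 _ Px) as [Lx _]. destruct (Prob_l1 _ Py) as [Ly _].
  destruct (l1_diff _ _ Lx Ly) as [LD _].
  set (D := fun k => x k - y k).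
  destruct (fubini_pos (fun k m => Rabs (D k) * npow g k m) (fun k => Rabs (D k) * 1) (nrm D)) as [c [Hc Hs]].
  - intros i j. destruct (npow_bounds g i j Pg). apply Rmult_le_pos; [apply Rabs_pos| lra].
  - intros i. apply is_series_scal_l'. apply (Prob_npow g i Pg).
  - apply (is_series_ext (fun k => Rabs (D k))); [intros k; apply eq_sym, Rmult_1_r|apply Series_correct, LD].
  - destruct (l1_le (fun m => mixN x g m - mixN y g m) c) as [L1 N1].
    + intros m.
      assert (E : mixN x g m - mixN y g m = Series (fun k => D k * npow g k m)).
      { symmetry. apply is_series_unique. unfold D.
        eapply is_series_ext; [|apply is_series_minus'; apply mix_series; try apply Px; try apply Py; auto].
        intros; simpl; ring. eexists; apply Px. eexists; apply Py. }
      rewrite E. eapply Rle_trans. apply Series_Rabs.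
      eexists. eapply is_series_ext; [|exact (Hc m)]. intros k. simpl.
      rewrite Rabs_mult, (Rabs_pos_eq (npow g k m)) by apply (npow_bounds g k m Pg). reflexivity.
      rewrite <- (is_series_unique _ _ (Hc m)). right. apply Series_ext. intros k.
      rewrite Rabs_mult, (Rabs_pos_eq (npow g k m)) by apply (npow_bounds g k m Pg). reflexivity.
    + eexists; exact Hs.
    + split; auto. rewrite (is_series_unique _ _ Hs) in N1. exact N1.
Qed.

Theorem Ritt_mix a g : Prob a -> RittN a -> Prob g -> Prob (mixN a g) /\ RittN (mixN a g).
Proof.
  intros Pa Ra Pg. assert (Pm := Prob_mix a g Pa Pg). split; auto.
  apply Ritt_of_bound; auto.
  destruct Ra as [C HC]. exists C. intros n.
  destruct (HC n) as [s [Hs Hle]].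
  destruct (mix_diff (npow a n) (npow a (S n)) g (Prob_npow a n Pa) (Prob_npow a (S n) Pa) Pg) as [L N].
  assert (E : forall m, mixN (npow a n) g m - mixN (npow a (S n)) g m = Dif (mixN a g) n m).
  { intros m. unfold Dif. rewrite !npow_mix; auto. }
  destruct (l1_ext _ _ E L) as [L2 N2]. rewrite N2.
  unfold nrm at 2 in N. rewrite (is_series_unique _ _ Hs) in N.
  assert (0 <= INR n) by apply pos_INR. nra.
Qed.

Lemma Series_zero (a : nat -> R) : (forall n, a n = 0) -> Series a = 0.
Proof.
  intros H. rewrite (is_series_unique a (sum_f_R0 a 0)). simpl. apply H.
  apply is_series_finite. intros; apply H.
Qed.

Definition supp (F : Z -> R) : Prop := forall k, (k < 0)%Z -> F k = 0.
Definition nt (F : Z -> R) : nat -> R := fun n => F (Z.of_nat n).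

Lemma conv_nat F1 F2 m : supp F2 -> conv F1 F2 (Z.of_nat m) = cauchy (nt F1) (nt F2) m.
Proof.
  intros H2. unfold conv.
  rewrite (is_series_unique _ (sum_f_R0 (fun k => F1 (Z.of_nat k) * F2 (Z.of_nat m - Z.of_nat k)%Z) m)).
  - unfold cauchy, nt. apply sum_eq. intros i Hi. rewrite Nat2Z.inj_sub by lia. reflexivity.
  - apply is_series_finite. intros k Hk. rewrite H2 by lia. ring.
Qed.

Lemma conv_neg F1 F2 z : supp F2 -> (z < 0)%Z -> conv F1 F2 z = 0.
Proof.
  intros H2 Hz. unfold conv. apply Series_zero. intros n. rewrite H2 by lia. ring.
Qed.

Lemma convpow_props F n : (forall m, convpow F n (Z.of_nat m) = npow (nt F) n m) /\ supp (convpow F n).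
Proof.
  induction n as [|n [IH1 IH2]].
  - split.
    + intros m. simpl. unfold delta0. destruct m; simpl. reflexivity.
      destruct (Z.eq_dec (Z.pos (Pos.of_succ_nat m)) 0); [discriminate|reflexivity].
    + intros z Hz. simpl. unfold delta0. destruct (Z.eq_dec z 0); [lia|reflexivity].
  - split.
    + intros m. simpl. rewrite conv_nat by auto. apply cauchy_ext; [intros; reflexivity| intros; apply IH1].
    + intros z Hz. simpl. apply conv_neg; auto.
Qed.

Lemma mixture_nat F G m : mixture F G (Z.of_nat m) = mixN (nt F) (nt G) m.
Proof.
  unfold mixture, mixN. apply Series_ext. intros k. rewrite (proj1 (convpow_props G k)). reflexivity.
Qed.

Lemma mixture_neg F G z : (z < 0)%Z -> mixture F G z = 0.
Proof.
  intros Hz. unfold mixture. apply Series_zero. intros k. rewrite (proj2 (convpow_props G k)) by auto. ring.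
Qed.

Lemma PZp_Prob F : PZp F -> Prob (nt F).
Proof. intros [H1 [H2 H3]]. split; auto. intros n; apply H1. Qed.

Lemma PZp_supp F : PZp F -> supp F.
Proof. intros [H1 [H2 H3]]. exact H2. Qed.

Lemma PZp_of F : supp F -> Prob (nt F) -> PZp F.
Proof.
  intros Hs HP. split; [|split].
  - intros k. destruct (Z_lt_le_dec k 0).
    + rewrite Hs by auto. lra.
    + rewrite <- (Z2Nat.id k) by auto. split. apply HP. apply (Prob_le1 (nt F)); auto.
  - exact Hs.
  - apply HP.
Qed.

Lemma RittN_ext a b : (forall k, a k = b k) -> RittN a -> RittN b.
Proof.
  intros E [C HC]. exists C. intros n. destruct (HC n) as [s [Hs Hle]]. exists s. split; auto.
  eapply is_series_ext; [|exact Hs]. intros k. cbv beta. rewrite (npow_ext a b E n k), (npow_ext a b E (S n) k). reflexivity.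
Qed.

Lemma classA_Ritt F : classA F -> RittN (nt F).
Proof.
  intros [_ [C HC]]. exists C. intros n. destruct (HC n) as [s [Hs Hle]]. exists s. split; auto.
  eapply is_series_ext; [|exact Hs]. intros k. cbv beta. rewrite !(proj1 (convpow_props F _)). reflexivity.
Qed.

Lemma Ritt_classA F : PZp F -> RittN (nt F) -> classA F.
Proof.
  intros HP [C HC]. split; auto. exists C. intros n. destruct (HC n) as [s [Hs Hle]]. exists s. split; auto.
  eapply is_series_ext; [|exact Hs]. intros k. cbv beta. rewrite !(proj1 (convpow_props F _)). reflexivity.
Qed.

Theorem proposition4p2 :
  (* A is a convex subset of P(Z^+) *)
  (forall F : Z -> R, classA F -> PZp F) /\
  (forall (F1 F2 : Z -> R) (t : R), classA F1 -> classA F2 -> 0 <= t <= 1 ->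
     classA (fun k => t * F1 k + (1 - t) * F2 k)) /\
  (* closure under convolution and under mixtures *)
  (forall (F1 F2 G : Z -> R), classA F1 -> classA F2 -> PZp G ->
     classA (conv F1 F2) /\ classA (mixture F1 G)).
Proof.
  split; [|split].
  - intros F H. apply H.
  - intros F1 F2 t H1 H2 Ht.
    destruct (Ritt_convex (nt F1) (nt F2) t (PZp_Prob _ (proj1 H1)) (PZp_Prob _ (proj1 H2))
      (classA_Ritt _ H1) (classA_Ritt _ H2) Ht) as [P R].
    apply Ritt_classA; [|exact R].
    apply PZp_of; [|exact P].
    intros k Hk. rewrite (PZp_supp F1 (proj1 H1)), (PZp_supp F2 (proj1 H2)) by auto. ring.
  - intros F1 F2 G H1 H2 HG.
    assert (P1 := PZp_Prob _ (proj1 H1)). assert (P2 := PZp_Prob _ (proj1 H2)).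
    assert (S2 := PZp_supp _ (proj1 H2)).
    assert (R1 := classA_Ritt _ H1). assert (R2 := classA_Ritt _ H2).
    assert (PG := PZp_Prob _ HG).
    split.
    + assert (E : forall k, cauchy (nt F1) (nt F2) k = nt (conv F1 F2) k).
      { intros k. unfold nt at 3. rewrite conv_nat; auto. }
      apply Ritt_classA.
      * apply PZp_of. intros z Hz; apply conv_neg; auto.
        apply (Prob_ext _ _ E). apply Prob_cauchy; auto.
      * apply (RittN_ext _ _ E). apply Ritt_cauchy; auto.
    + assert (E : forall k, mixN (nt F1) (nt G) k = nt (mixture F1 G) k).
      { intros k. unfold nt at 3. rewrite mixture_nat; auto. }
      destruct (Ritt_mix (nt F1) (nt G) P1 R1 PG) as [P R].
      apply Ritt_classA.
      * apply PZp_of. intros z Hz; apply mixture_neg; auto.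
        apply (Prob_ext _ _ E). auto.
      * apply (RittN_ext _ _ E). auto.
Qed.
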